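(* Let $H$ be a finite connected graph (loops allowed) with at least one edge. Then $\hom(\mathbb{T}^r,H)$ has long range action for no positive integer $r$ if and only if $H$ is dismantlable.
   Context: $N(i)$ is the set of nodes adjacent to $i$ (containing $i$ iff $i$ is looped). If $i\neq j$ are nodes with $N(i)\subseteq N(j)$, the map sending $i$ to $j$ and fixing other nodes is a fold of $H$ onto $H\setminus\{i\}$; $H$ is dismantlable if some sequence of folds reduces it to a single node. $\mathbb{T}^r$ is the infinite connected cycle-free graph with all degrees $r+1$, with a fixed root site $x$; $\hom(\mathbb{T}^r,H)$ is the set of graph homomorphisms $\mathbb{T}^r\to H$. $\hom(\mathbb{T}^r,H)$ has long range action if there exist $\varphi\in\hom(\mathbb{T}^r,H)$ and a node $i$ of $H$ such that for every $n\ge1$, no $\psi\in\hom(\mathbb{T}^r,H)$ which agrees with $\varphi$ on all sites at distance $n$ from $x$ satisfies $\psi(x)=i$. *)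

(* Defs.v *)
From mathcomp Require Import all_boot.
Set Implicit Arguments. Unset Strict Implicit. Unset Printing Implicit Defensive.

(* Graphs H: a finite type T of nodes with a symmetric relation e (loops allowed). *)

Definition nbhd (T : finType) (e : rel T) (A : {set T}) (i : T) : {set T} :=
  [set k in A | e i k].

Inductive dism (T : finType) (e : rel T) : {set T} -> Prop :=
| dism_single : forall A : {set T}, #|A| = 1 -> dism e A
| dism_fold : forall (A : {set T}) (i j : T),
    i \in A -> j \in A -> i != j ->
    nbhd e A i \subset nbhd e A j ->
    dism e (A :\ i) -> dism e A.

Definition dismantlable (T : finType) (e : rel T) : Prop := dism e [set: T].

(* The tree T^r: the Cayley graph of the free product of r+1 copies of Z/2,
   i.e. reduced words over 'I_(r+1) (no two consecutive letters equal);
   the root is the empty word, and s is adjacent to c :: s.  Every vertex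
   has degree r+1 and the graph is connected and cycle-free. *)
Definition tree_word (r : nat) (s : seq 'I_r.+1) : bool :=
  sorted (fun a b : 'I_r.+1 => a != b) s.

Definition site (r : nat) := {s : seq 'I_r.+1 | tree_word s}.

Definition root (r : nat) : site r := exist _ [::] isT.

Definition tadj (r : nat) (u v : site r) : Prop :=
  (exists c, proj1_sig v = c :: proj1_sig u) \/
  (exists c, proj1_sig u = c :: proj1_sig v).

Definition dist_root (r : nat) (u : site r) : nat := size (proj1_sig u).

Definition is_hom (r : nat) (T : finType) (e : rel T) (phi : site r -> T) : Prop :=
  forall u v : site r, tadj u v -> e (phi u) (phi v).

Definition long_range_action (r : nat) (T : finType) (e : rel T) : Prop :=
  exists (phi : site r -> T) (i : T), is_hom e phi /\
    forall n : nat, 1 <= n ->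
      ~ (exists psi : site r -> T, is_hom e psi /\
           (forall u : site r, dist_root u = n -> psi u = phi u) /\
           psi (root r) = i).

Definition connected_graph (T : finType) (e : rel T) : Prop :=
  forall x y : T, connect e x y.

(* Main.v *)
Require Import Defs.
From mathcomp Require Import all_boot zify.
From Stdlib Require Import Classical.
Set Implicit Arguments. Unset Strict Implicit.

Section Fold.
Variables (T : finType) (e : rel T).
Hypothesis esym : symmetric e.

Definition fold (i j : T) (x : T) := if x == i then j else x.

Lemma fold_adj (A : {set T}) i j x y : j \in A ->
  nbhd e A i \subset nbhd e A j -> y \in A -> e x y -> e (fold i j x) y.
Proof.
move=> _ sub yA exy; rewrite /fold; case: eqP => [ex|//]; subst x.
have : y \in nbhd e A i by rewrite inE yA exy.
by move/(subsetP sub); rewrite inE => /andP[].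
Qed.

Lemma fold_in (A : {set T}) i j x : j \in A -> x \in A -> fold i j x \in A.
Proof. by rewrite /fold; case: eqP. Qed.

Lemma fold_inD (A : {set T}) i j x : i != j -> j \in A -> x \in A -> fold i j x \in A :\ i.
Proof.
move=> ij jA xA; rewrite /fold in_setD1; case: (eqVneq x i) => [_ | xi].
  by rewrite jA andbT eq_sym.
by rewrite xi xA.
Qed.

Lemma fold_hom (A : {set T}) i j x y : j \in A ->
  nbhd e A i \subset nbhd e A j -> x \in A -> y \in A -> e x y ->
  e (fold i j x) (fold i j y).
Proof.
move=> jA sub xA yA exy.
have h1 := fold_adj jA sub yA exy.
rewrite esym; apply: fold_adj jA sub (fold_in i jA xA) _.
by rewrite esym.
Qed.

Lemma dism_seq (A : {set T}) : dism e A ->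
  (exists x y, [/\ x \in A, y \in A & e x y]) ->
  exists (g : nat -> T -> T) (K : nat) (z : T),
    [/\ (forall x, g 0 x = x),
        (forall t x, x \in A -> g t x \in A),
        (forall t x y, x \in A -> y \in A -> e x y -> e (g t.+1 x) (g t y)),
        (forall t x y, x \in A -> y \in A -> e x y -> e (g t x) (g t y))
      & (forall x, x \in A -> g K x = z) /\ e z z].
Proof.
elim=> {A} [A /eqP/cards1P [a ->] [x [y [xA yA exy]]] | A i j iA jA ij sub _ IH [x [y [xA yA exy]]]].
  exists (fun _ x => x), 0, a; split=> //; split.
  - by move=> x0; rewrite inE => /eqP.
  - by move: xA yA exy; rewrite !inE => /eqP-> /eqP->.
have [g [K [z [g0 gA gadj ghom [gK zz]]]]] : exists (g : nat -> T -> T) (K : nat) (z : T),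
    [/\ (forall x, g 0 x = x),
        (forall t x, x \in A :\ i -> g t x \in A :\ i),
        (forall t x y, x \in A :\ i -> y \in A :\ i -> e x y -> e (g t.+1 x) (g t y)),
        (forall t x y, x \in A :\ i -> y \in A :\ i -> e x y -> e (g t x) (g t y))
      & (forall x, x \in A :\ i -> g K x = z) /\ e z z].
  apply: IH; exists (fold i j x), (fold i j y); split.
  - exact: fold_inD ij jA xA.
  - exact: fold_inD ij jA yA.
  - exact: fold_hom jA sub xA yA exy.
exists (fun t x => match t with 0 => x | s.+1 => g s (fold i j x) end), K.+1, z.
split=> //.
- case=> // t x0 x0A; have := gA t _ (fold_inD ij jA x0A).
  by rewrite in_setD1 => /andP[].
- case=> [|t] x0 y0 x0A y0A e0.
    by rewrite g0; apply: fold_adj jA sub y0A e0.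
  apply: gadj; try exact: fold_inD ij jA _.
  exact: fold_hom jA sub x0A y0A e0.
- case=> // t x0 y0 x0A y0A e0; apply: ghom; try exact: fold_inD ij jA _.
  exact: fold_hom jA sub x0A y0A e0.
- split=> // x0 x0A; exact/gK/(fold_inD ij jA x0A).
Qed.


Hypothesis conn : connected_graph e.

Lemma dism_noLRA r : (exists x y : T, e x y) -> dismantlable e -> ~ long_range_action r e.
Proof.
move=> [x1 [y1 e1]] hd [phi [i0 [hphi Hn]]].
have [g [K [z [g0 _ gadj ghom [gK zz]]]]] := dism_seq hd (ex_intro _ x1 (ex_intro _ y1 (And3 (in_setT x1) (in_setT y1) e1))).
have [p pp lp] : exists2 p, path e z p & i0 = last z p by apply/connectP; apply: conn.
pose L := size p.
pose c s := nth z (z :: p) s.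
have cL : c L = i0 by rewrite lp /c /L -[last z p]/(last z (z :: p)) -nth_last.
have cadj : forall s, s < L -> e (c s.+1) (c s).
  move=> s sL; rewrite esym; move/pathP: pp => /(_ z s sL).
  by rewrite /c.
pose c' s := if s is s'.+1 then c s' else z.
pose n := K + L.+1.
pose h t x := if t <= K then g t x else c' (t - K).
have h0 : forall x, h 0 x = x by move=> x; rewrite /h leq0n g0.
have hadj : forall t x y, t.+1 <= n -> e x y -> e (h t.+1 x) (h t y).
  move=> t x y tn exy; rewrite /h.
  case: ifP => H1; case: ifP => H2.
  - by apply: gadj; rewrite ?in_setT.
  - lia.
  - have tK : t = K by lia.
    rewrite tK (_ : K.+1 - K = 1); last lia.
    by rewrite /c' /c /= gK ?in_setT.
  - have [s ts] : exists s, t = K + s.+1 by exists (t - K).-1; lia.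
    rewrite (_ : t.+1 - K = s.+2); last lia.
    rewrite (_ : t - K = s.+1); last lia.
    by apply: cadj; rewrite /n in tn; lia.
pose psi (u : site r) := if dist_root u <= n then h (n - dist_root u) (phi u) else phi u.
have child : forall u v : site r, (exists a, proj1_sig v = a :: proj1_sig u) -> e (psi u) (psi v).
  move=> u v [a va].
  have euv : e (phi u) (phi v) by apply: hphi; left; exists a.
  have dv : dist_root v = (dist_root u).+1 by rewrite /dist_root va.
  rewrite /psi dv.
  case: ifP => H1; case: ifP => H2.
  - rewrite (_ : n - dist_root u = (n - (dist_root u).+1).+1); last lia.
    by apply: hadj => //; lia.
  - have dn : dist_root u = n by lia.
    by rewrite dn subnn h0.
  - lia.
  - exact: euv.
apply: (Hn n); first lia.
exists psi; split; [|split].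
- move=> u v [uv|uv]; first exact: child.
  by rewrite esym; apply: child.
- by move=> u du; rewrite /psi du leqnn subnn h0.
- rewrite /psi /dist_root /= subn0 /h ifN; last lia.
  by rewrite (_ : n - K = L.+1) //; lia.
Qed.


Definition retr (B : {set T}) (rho : T -> T) :=
  [/\ forall x, rho x \in B, forall x, x \in B -> rho x = x
    & forall x y, e x y -> e (rho x) (rho y)].

Definition stiff (B : {set T}) :=
  forall i j, i \in B -> j \in B -> i != j -> ~~ (nbhd e B i \subset nbhd e B j).

Lemma stiff_step (x1 : T) (B : {set T}) rho : retr B rho -> ~ dism e B ->
  (1 < #|B| /\ stiff B) \/
  exists B' rho', [/\ retr B' rho', ~ dism e B' & #|B'| < #|B|].
Proof.
move=> [rB rfix rhom] nd.
case: (boolP [exists i, exists j, [&& i \in B, j \in B, i != j & nbhd e B i \subset nbhd e B j]]).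
  case/existsP=> i /existsP [j /and4P [iB jB ij sub]].
  right; exists (B :\ i), (fun x => fold i j (rho x)); split.
  - split.
    + by move=> x; apply: fold_inD ij jB (rB x).
    + move=> x; rewrite in_setD1 => /andP [xi xB].
      by rewrite rfix // /fold (negbTE xi).
    + by move=> x y exy; apply: fold_hom jB sub (rB x) (rB y) (rhom _ _ exy).
  - by move=> d; apply: nd; apply: dism_fold iB jB ij sub d.
  - by rewrite (cardsD1 i B) iB.
move=> hn; left; split.
  case: (ltnP 1 #|B|) => // hB.
  have : #|B| = 1 \/ #|B| = 0 by lia.
  case=> [/eqP h1|/eqP h0]; first by case: nd; apply: dism_single; apply/eqP.
  move: (rB x1); rewrite cards_eq0 in h0; by rewrite (eqP h0) inE.
move=> i j iB jB ij; apply/negP => sub; move/negP: hn; apply.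
apply/existsP; exists i; apply/existsP; exists j; by rewrite iB jB ij sub.
Qed.

Lemma stiff_exists (x1 : T) : ~ dismantlable e ->
  exists B rho, [/\ retr B rho, 1 < #|B| & stiff B].
Proof.
move=> nd.
suff: forall n (B : {set T}) rho, #|B| <= n -> retr B rho -> ~ dism e B ->
  exists B rho, [/\ retr B rho, 1 < #|B| & stiff B].
  move=> H; apply: (H #|[set: T]| [set: T] id (leqnn _)) => //; split=> // x; exact: in_setT.
elim=> [|n IH] B rho hB hr hd.
  case: (stiff_step x1 hr hd) => [[h1 h2]|[B' [rho' [_ _ h]]]]; first by exists B, rho.
  lia.
case: (stiff_step x1 hr hd) => [[h1 h2]|[B' [rho' [h1 h2 h]]]]; first by exists B, rho.
apply: (IH B' rho') => //; lia.
Qed.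

Lemma child_word r (s : seq 'I_r.+1) (c1 c2 : 'I_r.+1) :
  tree_word s -> c1 != c2 -> tree_word (c1 :: s) \/ tree_word (c2 :: s).
Proof.
case: s => [|a s] H h12; first by left.
rewrite /tree_word /= in H *.
case: (eqVneq c1 a) => [e1|n1]; last by left; apply/andP.
by right; apply/andP; split=> //; rewrite -e1 eq_sym.
Qed.

Lemma stiff_LRA B rho : retr B rho -> 1 < #|B| -> stiff B ->
  long_range_action (2 * #|T|) e.
Proof.
move=> [rB rfix rhom] /card_gt1P [a [b [aB bB ab]]] st.
set r := 2 * #|T|.
have nbex : forall x, x \in B -> exists y, (y \in B) && e x y.
  move=> x xB.
  have [j [jB jx]] : exists j, j \in B /\ x != j.
    case: (eqVneq x a) => [xa|xa]; last by exists a.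
    by exists b; rewrite xa.
  have /subsetPn [y yN _] := st x j xB jB jx.
  by exists y; rewrite inE in yN.
pose nb x := odflt x [pick y in B | e x y].
have nbP : forall x, x \in B -> (nb x \in B) && e x (nb x).
  move=> x xB; rewrite /nb; case: pickP => [y //|H] /=.
  by have [y] := nbex x xB; rewrite H.
pose f x (c : 'I_r.+1) := let y := nth x (enum T) (c %% #|T|) in
  if (y \in B) && e x y then y else nb x.
have fP : forall x c, x \in B -> (f x c \in B) && e x (f x c).
  by move=> x c xB; rewrite /f; case: ifP => // _; apply: nbP.
pose phiw (s : seq 'I_r.+1) := foldr (fun c x => f x c) a s.
have phiwB : forall s, phiw s \in B.
  by elim=> [|c s IH] //=; case/andP: (fP (phiw s) c IH).
pose phi (u : site r) := phiw (proj1_sig u).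
have phichild : forall (u v : site r) c, proj1_sig v = c :: proj1_sig u ->
    phi v = f (phi u) c.
  by move=> u v c h; rewrite /phi h.
have phihom : is_hom e phi.
  move=> u v [[c h]|[c h]].
    by rewrite (phichild _ _ _ h); case/andP: (fP (phi u) c (phiwB _)).
  by rewrite esym (phichild _ _ _ h); case/andP: (fP (phi v) c (phiwB _)).
have cover : forall (u : site r) w, w \in B -> e (phi u) w ->
    exists v : site r, (exists c, proj1_sig v = c :: proj1_sig u) /\ phi v = w.
  move=> u w wB ew.
  have wT : w \in enum T by rewrite mem_enum.
  have kT : index w (enum T) < #|T| by rewrite cardT index_mem.
  have k1 : index w (enum T) < r.+1 by rewrite /r; lia.
  have k2 : index w (enum T) + #|T| < r.+1 by rewrite /r; lia.
  pose c1 : 'I_r.+1 := Ordinal k1.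
  pose c2 : 'I_r.+1 := Ordinal k2.
  have c12 : c1 != c2.
    rewrite /c1 /c2 -val_eqE /=; apply/negP => /eqP.
move=> hh; have := kT; rewrite {1}hh; rewrite ltnNge leq_addl //.
  have fc : forall c : 'I_r.+1, c %% #|T| = index w (enum T) -> f (phi u) c = w.
    move=> c hc; rewrite /f hc nth_index // wB ew //.
  have hc1 : c1 %% #|T| = index w (enum T) by rewrite /= modn_small.
  have hc2 : c2 %% #|T| = index w (enum T) by rewrite /= modnDr modn_small.
  case: (child_word (proj2_sig u) c12) => hw.
    by exists (exist (fun s => tree_word s) (c1 :: proj1_sig u) hw); split; [exists c1 | exact: fc].
  by exists (exist (fun s => tree_word s) (c2 :: proj1_sig u) hw); split; [exists c2 | exact: fc].
pose i := if a == phi (@Defs.root r) then b else a.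
have iB : i \in B by rewrite /i; case: ifP.
have ineq : i != phi (@Defs.root r).
  rewrite /i; case: (eqVneq a (phi (@Defs.root r))) => [<-|//].
  by rewrite eq_sym.
exists phi, i; split=> // n n1 [psi [psihom [agree psir]]].
pose chi u := rho (psi u).
have chihom : forall u v, tadj u v -> e (chi u) (chi v).
  by move=> u v h; apply: rhom; apply: psihom.
have key : forall k, k <= n -> forall u : site r, dist_root u = n - k -> chi u = phi u.
  elim=> [_ u|k IH kn u du].
    by rewrite subn0 => du; rewrite /chi agree // rfix // phiwB.
  apply/eqP; rewrite eq_sym; apply/negPn/negP => Hne.
  have chiB : chi u \in B by apply: rB.
  move/negP: (st _ _ (phiwB _) chiB Hne); apply.
  apply/subsetP => w; rewrite !inE => /andP [wB ew]; rewrite wB /=.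
  have [v [[c vc] pv]] := cover u w wB ew.
  have dv : dist_root v = n - k by rewrite /dist_root vc /=; rewrite /dist_root in du; lia.
  rewrite -pv -(IH (ltnW kn) v dv).
  by apply: chihom; left; exists c.
have := key n (leqnn n) (@Defs.root r); rewrite subnn => /(_ erefl).
by rewrite /chi psir rfix // => h; move: ineq; rewrite h eqxx.
Qed.

End Fold.

Theorem mainTheorem10 (T : finType) (e : rel T) :
  symmetric e ->
  connected_graph e ->
  (exists x y : T, e x y) ->
  ((forall r : nat, 0 < r -> ~ long_range_action r e) <-> dismantlable e).
Proof.
move=> esym conn [x1 [y1 e1]]; split.
  move=> H; apply: NNPP => nd.
  have [B [rho [hr h1 hs]]] := stiff_exists esym x1 nd.
  apply: (H (2 * #|T|)); last exact: (stiff_LRA esym hr h1 hs).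
  have : 0 < #|T| by apply/card_gt0P; exists x1.
  by rewrite muln_gt0.
move=> hd r _; exact: dism_noLRA esym conn r (ex_intro _ x1 (ex_intro _ y1 e1)) hd.
Qed.
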